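(* Let $U$ be a uniformly convex Banach space satisfying Opial's condition, and let $Q\subseteq U$ be a closed, convex, bounded set. Let $r>0$ and let $\{\beta_n\}_n$ be a sequence of positive real numbers with $\lim_{n\to\infty}\beta_n=1$. Suppose $T:Q\to Q$ satisfies: for all $p,q\in Q$ with $\|p-q\|<r$, $\|T^np-T^nq\|\leq\beta_n\|p-q\|$ for every $n\in\mathbb{N}$. Let $\{q_n\}_n$ be a sequence in $Q$ converging weakly to some $w$ with $q_n-Tq_n\to 0$. If the asymptotic radius of $\{q_n\}_n$ relative to $Q$ is less than $r$, then $w$ is a fixed point of $T$.
   Context: Opial's condition (as defined in the paper): for every sequence $\{x_n\}_n$ in $U$ converging weakly to $x\in U$ and every $p\in U$ with $p\neq x$, one has $\limsup_{n\to\infty}\|x_n-x\|\leq\limsup_{n\to\infty}\|x_n-p\|$. For a bounded sequence $\{x_n\}_n$ in $U$, its asymptotic radius relative to $Q$ is $\inf_{y\in Q}\limsup_{n\to\infty}\|x_n-y\|$. *)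

(* Defs.v *)
From HB Require Import structures.
From mathcomp Require Import all_boot all_order all_algebra.
From mathcomp Require Import all_classical all_reals all_analysis.
Set Implicit Arguments. Unset Strict Implicit. Unset Printing Implicit Defensive.
Import Order.TTheory GRing.Theory Num.Theory.
Import numFieldNormedType.Exports.
Local Open Scope classical_set_scope.
Local Open Scope ring_scope.

Definition convex_subset {R : realType} {U : normedModType R} (Q : set U) :=
  forall x y (t : R), Q x -> Q y -> 0 <= t -> t <= 1 ->
    Q (t *: x + (1 - t) *: y).

Definition uniformly_convex {R : realType} (U : normedModType R) :=
  forall eps : R, 0 < eps -> eps <= 2 ->
    exists2 delta : R, 0 < delta &
      forall x y : U, `|x| <= 1 -> `|y| <= 1 -> eps <= `|x - y| ->
        `|(2^-1) *: (x + y)| <= 1 - delta.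

Definition weak_cvg {R : realType} {U : normedModType R} (x : nat -> U) (l : U) :=
  forall f : {linear U -> R^o}, continuous f -> (f \o x) @ \oo --> f l.

Definition opial {R : realType} (U : normedModType R) :=
  forall (x : nat -> U) (l p : U), weak_cvg x l -> p != l ->
    (limn_esup (fun n => (`|x n - l|)%:E) <= limn_esup (fun n => (`|x n - p|)%:E))%E.

Definition asymptotic_radius {R : realType} {U : normedModType R}
    (x : nat -> U) (Q : set U) : \bar R :=
  ereal_inf [set limn_esup (fun n => (`|x n - y|)%:E) | y in Q].

(* Main.v *)
Require Import Defs.
From HB Require Import structures.
From mathcomp Require Import all_boot all_order all_algebra.
From mathcomp Require Import all_classical all_reals all_analysis.
From mathcomp Require Import ring lra.
Import Order.TTheory GRing.Theory Num.Theory.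
Import numFieldNormedType.Exports.
Local Open Scope classical_set_scope.
Local Open Scope ring_scope.
Lemma esup_le (R : realType) (a : nat -> R) (t : R) :
  (\forall n \near \oo, a n <= t) -> (limn_esup (fun n => (a n)%:E) <= t%:E)%E.
Proof.
move=> H; rewrite /limn_esup limf_esupE.
apply: le_trans (ereal_inf_lbound _) _.
  exists [set n | a n <= t]; first exact: H.
  reflexivity.
apply: ge_ereal_sup => _ [n /= hn <-]; by rewrite lee_fin.
Qed.

Lemma esup_lt (R : realType) (a : nat -> R) (t : R) :
  (limn_esup (fun n => (a n)%:E) < t%:E)%E -> \forall n \near \oo, a n < t.
Proof.
rewrite /limn_esup limf_esupE => /ereal_inf_lt [_ [V hV <-]] hlt.
apply: filterS hV => n Vn.
rewrite -lte_fin; apply: le_lt_trans hlt.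
by apply: ereal_sup_ubound; exists n.
Qed.
Lemma weak_sub (R : realType) (U : normedModType R) (x : nat -> U) l (phi : nat -> nat) :
  weak_cvg x l -> (forall k, (k <= phi k)%N) -> weak_cvg (x \o phi) l.
Proof.
move=> hx hphi f cf.
have hp : phi @ \oo --> \oo.
  move=> A [N _ HA]; exists N => // k /= Nk; apply: HA => /=.
  exact: leq_trans Nk (hphi k).
exact: (cvg_comp _ _ hp (hx f cf)).
Qed.

Lemma weak_comb (R : realType) (U : normedModType R) (x y : nat -> U) l (t : R) :
  weak_cvg x l -> weak_cvg y l -> weak_cvg (fun k => t *: x k + (1 - t) *: y k) l.
Proof.
move=> hx hy f cf.
have -> : f \o (fun k => t *: x k + (1 - t) *: y k) =
   (fun k => t * (f \o x) k + (1 - t) * (f \o y) k).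
  by apply/funext => k /=; rewrite linearD !linearZ.
have -> : f l = t * f l + (1 - t) * f l by rewrite -mulrDl addrC subrK mul1r.
apply: cvgD; [apply: cvgMl_tmp; exact: hx | apply: cvgMl_tmp; exact: hy].
Qed.

Lemma not_near (P : nat -> Prop) : ~ (\forall n \near \oo, P n) ->
  forall M, exists n, (M <= n)%N /\ ~ P n.
Proof.
move=> H M; apply: contrapT => H2; apply: H; exists M => // n /= Mn.
apply: contrapT => Pn; apply: H2; by exists n.
Qed.

Lemma half_vec (R : realType) (U : normedModType R) (a b w : U) :
  2^-1 *: a + (1 - 2^-1) *: b - w = 2^-1 *: ((a - w) + (b - w)).
Proof.
have h2 : (1 - 2^-1 : R) = 2^-1 by field.
rewrite h2 scalerDr !scalerBr addrACA -opprD -scalerDr; congr (_ - _).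
rewrite -[X in X + X]scale1r -scalerDl scalerA.
have -> : ((1 + 1) / 2 : R) = 1 by field.
by rewrite scale1r.
Qed.

Lemma wQ_step (R : realType) (U : normedModType R) (Q : set U) (w : U) (d s : R)
  (x : nat -> U) :
  opial U -> convex_subset Q -> ~ Q w -> 0 < d -> d <= 4^-1 ->
  (forall X Y : U, `|X| <= 1 -> `|Y| <= 1 -> 2^-1 <= `|X - Y| ->
        `|(2^-1) *: (X + Y)| <= 1 - d) ->
  0 < s -> (forall n, Q (x n)) -> weak_cvg x w ->
  (\forall n \near \oo, `|x n - w| <= s) ->
  exists y : nat -> U, (forall n, Q (y n)) /\ weak_cvg y w /\
     \forall n \near \oo, `|y n - w| <= (1 - d) * s.
Proof.
move=> op cQ nQw d0 d4 hd s0 Qx wx hs.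
case: (pselect (\forall n \near \oo, `|x n - w| <= (1 - d) * s)) => h.
  by exists x.
have hge : (((1 - d) * s)%:E <= limn_esup (fun n => (`|x n - w|)%:E))%E.
  rewrite leNgt; apply/negP => /esup_lt hlt; apply: h.
  by apply: filterS hlt => n /ltW.
have hm : forall m, ~ (\forall n \near \oo, `|x n - x m| <= s / 2).
  move=> m /esup_le hle.
  have xmw : x m != w by apply/eqP => e; apply: nQw; rewrite -e.
  have := le_trans hge (le_trans (op x w (x m) wx xmw) hle).
  rewrite lee_fin => H.
  have : (1 - d) * s <= s / 2 by [].
  nra.
have /boolp.choice [g hg] : forall m, exists n, (m <= n)%N /\ s / 2 < `|x n - x m|.
  move=> m; have [n [mn hn]] := @not_near _ (hm m) m.
  by exists n; split => //; rewrite ltNge; apply/negP.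
case: hs => N _ HN.
exists (fun k => 2^-1 *: x (g (N + k)) + (1 - 2^-1) *: x (N + k)); split; [|split].
- by move=> k; apply: cQ => //; rewrite ?invr_ge0 ?invf_le1 ?ler1n.
- have h1 : forall k, (k <= g (N + k))%N.
    move=> k; apply: leq_trans (proj1 (hg _)); exact: leq_addl.
  have h2 : forall k, (k <= N + k)%N by move=> k; exact: leq_addl.
  exact: (@weak_comb _ _ _ _ _ 2^-1 (@weak_sub _ _ _ _ _ wx h1) (@weak_sub _ _ _ _ _ wx h2)).
- exists 0%N => // k _ /=.
  set a := x (g (N + k)); set b := x (N + k).
  have ha : `|a - w| <= s.
    apply: HN => /=; apply: leq_trans (proj1 (hg _)); exact: leq_addr.
  have hb : `|b - w| <= s by apply: HN => /=; exact: leq_addr.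
  have hab : s / 2 < `|a - b| := proj2 (hg (N + k)).
  rewrite half_vec.
  have -> : 2^-1 *: (a - w + (b - w)) =
      s *: (2^-1 *: (s^-1 *: (a - w) + s^-1 *: (b - w))).
    rewrite -scalerDr !scalerA; congr (_ *: _); field; exact: lt0r_neq0.
  rewrite normrZ gtr0_norm // mulrC ler_pM2r //.
  apply: hd.
  + by rewrite normrZ gtr0_norm ?invr_gt0 // ler_pdivrMl // mulr1.
  + by rewrite normrZ gtr0_norm ?invr_gt0 // ler_pdivrMl // mulr1.
  + rewrite -scalerBr opprB addrA subrK normrZ gtr0_norm ?invr_gt0 //.
    rewrite -(ler_pM2l s0) mulrA mulfV ?gt_eqF // mul1r; lra.
Qed.

Lemma w_in_Q (R : realType) (U : normedModType R) (Q : set U) (q : nat -> U) (w : U) :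
  uniformly_convex U -> opial U -> closed Q -> convex_subset Q -> bounded_set Q ->
  (forall n, Q (q n)) -> weak_cvg q w -> Q w.
Proof.
move=> uc op cQ cvQ bQ Qq wq.
apply: contrapT => nQw.
have [de de0 hde] := uc (2^-1) ltac:(rewrite invr_gt0 ltr0n //) ltac:(lra).
pose d := Num.min de 4^-1.
have dde : d <= de by rewrite /d ge_min lexx.
have d4 : d <= 4^-1 by rewrite /d ge_min lexx orbT.
have d0 : 0 < d by rewrite /d lt_min de0 invr_gt0 ltr0n.
have hd : forall X Y : U, `|X| <= 1 -> `|Y| <= 1 -> 2^-1 <= `|X - Y| ->
        `|(2^-1) *: (X + Y)| <= 1 - d.
  move=> X Y hX hY hXY; apply: le_trans (hde X Y hX hY hXY) _; lra.
have [M HM] : exists M, forall y, Q y -> `|y| <= M.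
  case: bQ => M0 [_ H]; exists (M0 + 1); apply: (H (M0 + 1)); lra.
pose s0 := M + `|w| + 1.
have s0p : 0 < s0.
  have := HM _ (Qq 0%N); have := normr_ge0 (q 0%N); have := normr_ge0 w.
  rewrite /s0; lra.
have key : forall k, exists x : nat -> U, (forall n, Q (x n)) /\ weak_cvg x w /\
    \forall n \near \oo, `|x n - w| <= (1 - d) ^+ k * s0.
  elim => [|k [x [Qx [wx hx]]]].
    exists q; split => //; split => //; apply: nearW => n.
    rewrite expr0 mul1r; apply: le_trans (ler_normB _ _) _.
    have := HM _ (Qq n); rewrite /s0; lra.
  have sk : 0 < (1 - d) ^+ k * s0.
    apply: mulr_gt0 => //; apply: exprn_gt0; lra.
  have [y [Qy [wy hy]]] := @wQ_step _ _ _ _ _ _ _ op cvQ nQw d0 d4 hd sk Qx wx hx.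
  by exists y; split => //; split => //; rewrite exprS -mulrA.
apply: nQw; rewrite ((closure_id Q).1 cQ).
move=> B /nbhs_ballP [e e0 hB].
have hg : `|1 - d| < 1 by rewrite ger0_norm; lra.
have [K _ HK] := cvgr0_norm_lt _ (cvg_geometric s0 hg) _ e0.
have hK := HK K (leqnn K); rewrite /= /geometric in hK.
have [x [Qx [_ [N _ HN]]]] := key K.
exists (x N); split => //; apply: hB.
rewrite -ball_normE /ball_ /= distrC.
apply: le_lt_trans (HN N (leqnn N)) _.
apply: le_lt_trans (ler_norm _) _; by rewrite mulrC.
Qed.

Lemma half_vec2 (R : realType) (U : normedModType R) (a w z : U) :
  a - 2^-1 *: (w + z) = 2^-1 *: ((a - w) + (a - z)).
Proof.
rewrite addrACA -opprD scalerDr scalerBr -scalerDr; congr (_ - _).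
rewrite -[X in X + X]scale1r -scalerDl scalerA.
have -> : (2^-1 * (1 + 1) : R) = 1 by field.
by rewrite scale1r.
Qed.

Lemma near2 (P P' : nat -> Prop) : (\forall n \near \oo, P n) ->
  (\forall n \near \oo, P' n) -> \forall n \near \oo, P n /\ P' n.
Proof.
case=> N1 _ H1 [N2 _ H2]; exists (maxn N1 N2) => // n /= h; split;
  [apply: H1|apply: H2] => /=; apply: leq_trans h; [exact: leq_maxl|exact: leq_maxr].
Qed.

Lemma ex_near (P : nat -> Prop) : (\forall n \near \oo, P n) -> exists n, P n.
Proof. by case=> N _ H; exists N; apply: H => /=. Qed.

Lemma le0_of_small (R : realType) (x : R) : (forall e, 0 < e -> x <= e) -> x <= 0.
Proof.
move=> H; rewrite leNgt; apply/negP => hx.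
have := H (x / 2) ltac:(lra). lra.
Qed.

Theorem mainTheorem4 (R : realType) (U : completeNormedModType R)
  (Q : set U) (r : R) (beta : nat -> R) (T : U -> U) (q : nat -> U) (w : U) :
  uniformly_convex U -> opial U ->
  closed Q -> convex_subset Q -> bounded_set Q ->
  0 < r ->
  (forall n, 0 < beta n) -> beta @ \oo --> (1 : R) ->
  (forall x, Q x -> Q (T x)) ->
  (forall p x, Q p -> Q x -> `|p - x| < r ->
     forall n, (0 < n)%N -> `|iter n T p - iter n T x| <= beta n * `|p - x|) ->
  (forall n, Q (q n)) -> weak_cvg q w ->
  (fun n => q n - T (q n)) @ \oo --> (0 : U) ->
  (asymptotic_radius q Q < r%:E)%E ->
  T w = w.
Proof.
move=> uc op cQ cvQ bQ r0 b0 bcvg TQ HL Qq wq hT hrad.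
have Qw : Q w := @w_in_Q _ _ _ _ _ uc op cQ cvQ bQ Qq wq.
have T1 : forall a b, Q a -> Q b -> `|a - b| < r -> `|T a - T b| <= beta 1%N * `|a - b|.
  by move=> a b Qa Qb h; exact: (HL a b Qa Qb h 1%N isT).
have iterQ : forall m x, Q x -> Q (iter m T x).
  by elim => [//|m IH] x Qx /=; apply: TQ; apply: IH.
have approx : (forall eta, 0 < eta -> exists a, Q a /\ `|a - w| <= eta /\ `|T a - w| <= eta) ->
    T w = w.
  move=> H; apply/eqP; rewrite -subr_eq0 -normr_le0; apply: le0_of_small => e e0.
  have b1 := b0 1%N.
  pose eta := Num.min (r / 2) (e / (beta 1%N + 2)).
  have eta0 : 0 < eta by rewrite lt_min; apply/andP; split; [lra|apply: divr_gt0; lra].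
  have etar : eta <= r / 2 by rewrite /eta ge_min lexx.
  have etae : eta * (beta 1%N + 2) <= e.
    rewrite -ler_pdivlMr; last lra.
    by rewrite /eta ge_min lexx orbT.
  have [a [Qa [ha hTa]]] := H eta eta0.
  have h1 := T1 w a Qw Qa ltac:(rewrite distrC; lra).
  have h2 : `|T w - w| <= `|T w - T a| + `|T a - w|.
    exact: ler_distD.
  have h3 : beta 1%N * `|w - a| <= beta 1%N * eta.
    by rewrite ler_pM2l // distrC.
  nra.
have qTm : forall m eta, 0 < eta -> \forall n \near \oo, `|q n - iter m T (q n)| < eta.
  elim => [|m IH] eta eta0.
    by apply: nearW => n /=; rewrite subrr normr0.
  have bm := b0 m.
  have e1 : 0 < Num.min r (eta / 2 / (beta m + 1)).
    by rewrite lt_min r0 /=; apply: divr_gt0; lra.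
  have F1 := IH (eta / 2) ltac:(lra); have F2 := cvgr0_norm_lt _ hT _ e1.
  have {}F2 := F2 eventually_filter.
  apply: (filterS2 _ _ F1 F2) => n h1 h2.
  rewrite lt_min in h2; case/andP: h2 => h2r h2e.
  have h3 : `|iter m T (q n) - iter m T (T (q n))| <= (beta m + 1) * `|q n - T (q n)|.
    clear -HL Qq TQ h2r b0; case: m => [|m] /=.
      by rewrite mulrDl mul1r ler_wpDl // mulr_ge0 // ltW.
    apply: le_trans (HL _ _ (Qq n) (TQ _ (Qq n)) h2r m.+1 isT) _.
    by rewrite ler_wpM2r // lerDl.
  have h4 : (beta m + 1) * `|q n - T (q n)| < eta / 2.
    by rewrite -ltr_pdivlMl; [rewrite mulrC|lra].
  rewrite iterSr; apply: le_lt_trans (ler_distD (iter m T (q n)) _ _) _.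
  lra.
set fw := limn_esup (fun n => (`|q n - w|)%:E).
have fw_lt : (fw < r%:E)%E.
  have [e [y Qy Ey] hy] := ereal_inf_lt hrad; rewrite -Ey in hy.
  case: (eqVneq y w) => [e1|ne]; first by rewrite /fw -e1.
  exact: le_lt_trans (op q w y wq ne) hy.
have Hr : \forall n \near \oo, `|q n - w| < r := esup_lt _ _ _ fw_lt.
have [[rho [rho0 Erho]] | Hsmall] : (exists rho, 0 < rho /\ fw = rho%:E) \/
    (forall eta, 0 < eta -> (fw < eta%:E)%E).
  move: fw_lt; case: fw => [rho||] h.
  - case: (ltrP 0 rho) => hr; first by left; exists rho.
    by right => eta eta0; rewrite lte_fin; lra.
  - by [].
  - by right => eta _; rewrite ltNye.
- have Tm : forall eps, 0 < eps -> \forall m \near \oo, `|iter m T w - w| <= eps.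
    move=> eps eps0.
    pose e0 := Num.min (eps / (2 * rho + 1)) 2.
    have e00 : 0 < e0 by rewrite lt_min; apply/andP; split; [apply: divr_gt0; lra|lra].
    have e02 : e0 <= 2 by rewrite /e0 ge_min lexx orbT.
    have e0e : e0 * (2 * rho + 1) <= eps.
      rewrite -ler_pdivlMr; last lra.
      by rewrite /e0 ge_min lexx.
    have [de de0 hde] := uc e0 e00 e02.
    pose d := Num.min de 1.
    have d0 : 0 < d by rewrite lt_min de0 ltr01.
    have d1 : d <= 1 by rewrite /d ge_min lexx orbT.
    have dde : d <= de by rewrite /d ge_min lexx.
    pose k := rho * d / 2.
    have k0 : 0 < k by rewrite /k; apply: divr_gt0; [apply: mulr_gt0|]; lra.
    have kr : k <= rho / 2 by rewrite /k; nra.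
    pose eta := Num.min 1 (k / (rho + 3)).
    have eta0 : 0 < eta by rewrite lt_min ltr01 /=; apply: divr_gt0; lra.
    have eta1 : eta <= 1 by rewrite /eta ge_min lexx.
    have etak : eta * (rho + 3) <= k.
      rewrite -ler_pdivlMr; last lra.
      by rewrite /eta ge_min lexx orbT.
    have Fb : \forall t \near \oo, `|1 - beta t| < eta := cvgr_dist_lt _ _ bcvg _ eta0.
    have Fm : \forall m \near \oo, (0 < m)%N by exists 1%N.
    case: Fb => N1 _ HN1; exists (maxn N1 1) => // m /= hm.
    have hbm := HN1 m (leq_trans (leq_maxl _ _) hm).
    have m1 : (0 < m)%N := leq_trans (leq_maxr _ _) hm.
    rewrite leNgt; apply/negP => hgt.
    set z := iter m T w.
    pose mid := 2^-1 *: (w + z).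
    have wmid : `|w - mid| = 2^-1 * `|z - w|.
      rewrite /mid half_vec2 subrr add0r normrZ distrC ger0_norm // invr_ge0 ler0n.
    have midw : mid != w.
      apply/eqP => e; move: wmid; rewrite e subrr normr0 => h0; lra.
    have Hop := op q w mid wq midw.
    pose Rr := rho + k.
    have Rr0 : 0 < Rr by rewrite /Rr; lra.
    have hb1 : beta m <= 1 + eta.
      have : beta m - 1 <= `|1 - beta m| by rewrite distrC ler_norm.
      lra.
    have bound : \forall n \near \oo, `|q n - mid| <= Rr * (1 - d).
      have G1 : \forall n \near \oo, `|q n - w| < rho + eta.
        by apply: esup_lt; rewrite -/fw Erho lte_fin; lra.
      have G3 := qTm m eta eta0.
      case: (near2 _ _ (near2 _ _ G1 Hr) G3) => N _ HN; exists N => // n /= hn.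
      case: (HN n hn) => [[g1 g2] g3].
      have l1 := HL (q n) w (Qq n) Qw g2 m m1.
      have l2 := ler_distD (iter m T (q n)) (q n) z.
      have p1 : beta m * `|q n - w| <= (1 + eta) * (rho + eta).
        apply: ler_pM; [exact: ltW|exact: normr_ge0|exact: hb1|exact: ltW].
      have hz : `|q n - z| <= Rr.
        rewrite /Rr; nra.
      have hw : `|q n - w| <= Rr.
        rewrite /Rr; nra.
      have hzw : Rr * e0 <= `|z - w|.
        have : Rr <= 2 * rho + 1 by rewrite /Rr; lra.
        nra.
      have key := hde (Rr^-1 *: (q n - w)) (Rr^-1 *: (q n - z)).
      have -> : q n - mid = Rr *: (2^-1 *: (Rr^-1 *: (q n - w) + Rr^-1 *: (q n - z))).
        rewrite /mid half_vec2 -scalerDr !scalerA; congr (_ *: _).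
        by field; exact: lt0r_neq0.
      rewrite normrZ gtr0_norm // ler_pM2l //.
      apply: le_trans (key _ _ _) _.
      + by rewrite normrZ gtr0_norm ?invr_gt0 // ler_pdivrMl // mulr1.
      + by rewrite normrZ gtr0_norm ?invr_gt0 // ler_pdivrMl // mulr1.
      + rewrite -scalerBr.
        have -> : q n - w - (q n - z) = z - w.
          by rewrite opprB [z - q n]addrC addrACA subrr add0r addrC.
        rewrite normrZ gtr0_norm ?invr_gt0 //.
        by rewrite ler_pdivlMl // distrC.
      + lra.
    have := le_trans Hop (esup_le _ _ _ bound).
    rewrite -/fw Erho lee_fin /Rr /k => hle.
    nra.
  apply: approx => eta eta0.
  have [N _ HN] := Tm eta eta0.
  exists (iter N T w); split; first exact: iterQ.
  split; first exact: (HN N (leqnn N)).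
  exact: (HN N.+1 (leqnSn N)).
- apply: approx => eta eta0.
  have F1 := esup_lt _ _ _ (Hsmall (eta / 2) ltac:(lra)).
  have F2 := cvgr0_norm_lt _ hT _ (ltac:(lra) : 0 < eta / 2).
  have [n [h1 h2]] := ex_near _ (filterS2 _ (fun n a b => conj a b) F1 F2).
  exists (q n); split => //; split; first lra.
  apply: le_trans (ler_distD (q n) _ _) _; rewrite distrC; lra.
Qed.
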